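(* The following equations are derivable in equational logic from $\mathsf{Md}_\bot$: $0\cdot 0=0$; $-0=0$; $0\cdot x=0\cdot(-x)$; $0\cdot(x\cdot y)=0\cdot(x+y)$; $-(x\cdot y)=x\cdot(-y)$; $(-1)\cdot x=-x$; $(-x)^{-1}=-(x^{-1})$; $(x\cdot x^{-1})\cdot x^{-1}=x^{-1}$; $-\bot=\bot$; $\bot^{-1}=\bot$.
   Context: The signature has one sort, constants $0,1,\bot$, binary operations $+,\cdot$ and unary operations $-$ and $(\,\cdot\,)^{-1}$; $^{-1}$ binds stronger than $\cdot$, which binds stronger than $+$. $\mathsf{Md}_\bot$ is the set of equations (variables universally quantified): $(x+y)+z=x+(y+z)$; $x+y=y+x$; $x+0=x$; $x+(-x)=0\cdot x$; $(x\cdot y)\cdot z=x\cdot(y\cdot z)$; $x\cdot y=y\cdot x$; $1\cdot x=x$; $x\cdot(y+z)=x\cdot y+x\cdot z$; $-(-x)=x$; $0\cdot(x\cdot x)=0\cdot x$; $(x^{-1})^{-1}=x+0\cdot x^{-1}$; $x\cdot x^{-1}=1+0\cdot x^{-1}$; $(x\cdot y)^{-1}=x^{-1}\cdot y^{-1}$; $1^{-1}=1$; $0^{-1}=\bot$; $x+\bot=\bot$; $x\cdot\bot=\bot$. *)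

(* Defs.v *)
Inductive term : Type :=
| Var  : nat -> term
| Zero : term
| One  : term
| Bot  : term
| Add  : term -> term -> term
| Mul  : term -> term -> term
| Neg  : term -> term
| Inv  : term -> term.

Fixpoint subst (s : nat -> term) (t : term) : term :=
  match t with
  | Var n => s n
  | Zero => Zero
  | One => One
  | Bot => Bot
  | Add a b => Add (subst s a) (subst s b)
  | Mul a b => Mul (subst s a) (subst s b)
  | Neg a => Neg (subst s a)
  | Inv a => Inv (subst s a)
  end.

Definition vx := Var 0.
Definition vy := Var 1.
Definition vz := Var 2.

Inductive Md_bot : term -> term -> Prop :=
| ax_add_assoc : Md_bot (Add (Add vx vy) vz) (Add vx (Add vy vz))
| ax_add_comm  : Md_bot (Add vx vy) (Add vy vx)
| ax_add_0     : Md_bot (Add vx Zero) vx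
| ax_add_neg   : Md_bot (Add vx (Neg vx)) (Mul Zero vx)
| ax_mul_assoc : Md_bot (Mul (Mul vx vy) vz) (Mul vx (Mul vy vz))
| ax_mul_comm  : Md_bot (Mul vx vy) (Mul vy vx)
| ax_mul_1     : Md_bot (Mul One vx) vx
| ax_distr     : Md_bot (Mul vx (Add vy vz)) (Add (Mul vx vy) (Mul vx vz))
| ax_neg_neg   : Md_bot (Neg (Neg vx)) vx
| ax_zero_sq   : Md_bot (Mul Zero (Mul vx vx)) (Mul Zero vx)
| ax_inv_inv   : Md_bot (Inv (Inv vx)) (Add vx (Mul Zero (Inv vx)))
| ax_mul_inv   : Md_bot (Mul vx (Inv vx)) (Add One (Mul Zero (Inv vx)))
| ax_inv_mul   : Md_bot (Inv (Mul vx vy)) (Mul (Inv vx) (Inv vy))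
| ax_inv_1     : Md_bot (Inv One) One
| ax_inv_0     : Md_bot (Inv Zero) Bot
| ax_add_bot   : Md_bot (Add vx Bot) Bot
| ax_mul_bot   : Md_bot (Mul vx Bot) Bot.

Inductive derivable (E : term -> term -> Prop) : term -> term -> Prop :=
| d_ax    : forall l r, E l r -> derivable E l r
| d_refl  : forall t, derivable E t t
| d_sym   : forall t u, derivable E t u -> derivable E u t
| d_trans : forall t u v, derivable E t u -> derivable E u v -> derivable E t v
| d_subst : forall (s : nat -> term) t u,
    derivable E t u -> derivable E (subst s t) (subst s u)
| d_add   : forall t t' u u', derivable E t t' -> derivable E u u' ->
    derivable E (Add t u) (Add t' u')
| d_mul   : forall t t' u u', derivable E t t' -> derivable E u u' ->
    derivable E (Mul t u) (Mul t' u')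
| d_neg   : forall t t', derivable E t t' -> derivable E (Neg t) (Neg t')
| d_inv   : forall t t', derivable E t t' -> derivable E (Inv t) (Inv t').

(* Main.v *)
Require Import Defs.
From Stdlib Require Import Setoid Morphisms.

Notation "a == b" := (derivable Md_bot a b) (at level 70).

Add Parametric Relation : term (derivable Md_bot)
  reflexivity proved by (d_refl _)
  symmetry proved by (d_sym _)
  transitivity proved by (d_trans _) as deq.
Add Parametric Morphism : Add with signature derivable Md_bot ==> derivable Md_bot ==> derivable Md_bot as add_m.
Proof. intros; apply d_add; auto. Qed.
Add Parametric Morphism : Mul with signature derivable Md_bot ==> derivable Md_bot ==> derivable Md_bot as mul_m.
Proof. intros; apply d_mul; auto. Qed.
Add Parametric Morphism : Neg with signature derivable Md_bot ==> derivable Md_bot as neg_m.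
Proof. intros; apply d_neg; auto. Qed.
Add Parametric Morphism : Inv with signature derivable Md_bot ==> derivable Md_bot as inv_m.
Proof. intros; apply d_inv; auto. Qed.

Definition sb (a b c : term) : nat -> term :=
  fun n => match n with 0 => a | 1 => b | _ => c end.

Ltac inst A a b c := exact (d_subst _ (sb a b c) _ _ (d_ax _ _ _ A)).

Lemma add_assoc a b c : Add (Add a b) c == Add a (Add b c). Proof. inst ax_add_assoc a b c. Qed.
Lemma add_comm a b : Add a b == Add b a. Proof. inst ax_add_comm a b Zero. Qed.
Lemma add_0 a : Add a Zero == a. Proof. inst ax_add_0 a Zero Zero. Qed.
Lemma add_neg a : Add a (Neg a) == Mul Zero a. Proof. inst ax_add_neg a Zero Zero. Qed.
Lemma mul_assoc a b c : Mul (Mul a b) c == Mul a (Mul b c). Proof. inst ax_mul_assoc a b c. Qed.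
Lemma mul_comm a b : Mul a b == Mul b a. Proof. inst ax_mul_comm a b Zero. Qed.
Lemma mul_1 a : Mul One a == a. Proof. inst ax_mul_1 a Zero Zero. Qed.
Lemma distr a b c : Mul a (Add b c) == Add (Mul a b) (Mul a c). Proof. inst ax_distr a b c. Qed.
Lemma neg_neg a : Neg (Neg a) == a. Proof. inst ax_neg_neg a Zero Zero. Qed.
Lemma zero_sq a : Mul Zero (Mul a a) == Mul Zero a. Proof. inst ax_zero_sq a Zero Zero. Qed.
Lemma inv_inv a : Inv (Inv a) == Add a (Mul Zero (Inv a)). Proof. inst ax_inv_inv a Zero Zero. Qed.
Lemma mul_inv a : Mul a (Inv a) == Add One (Mul Zero (Inv a)). Proof. inst ax_mul_inv a Zero Zero. Qed.
Lemma inv_mul a b : Inv (Mul a b) == Mul (Inv a) (Inv b). Proof. inst ax_inv_mul a b Zero. Qed.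
Lemma inv_1 : Inv One == One. Proof. exact (d_ax _ _ _ ax_inv_1). Qed.
Lemma inv_0 : Inv Zero == Bot. Proof. exact (d_ax _ _ _ ax_inv_0). Qed.
Lemma add_bot a : Add a Bot == Bot. Proof. inst ax_add_bot a Zero Zero. Qed.
Lemma mul_bot a : Mul a Bot == Bot. Proof. inst ax_mul_bot a Zero Zero. Qed.

Lemma zero_neg1 : Mul Zero (Neg One) == Zero.
Proof.
  rewrite <- (add_neg (Neg One)), neg_neg, (add_comm (Neg One) One), add_neg,
    (mul_comm Zero One), mul_1. reflexivity.
Qed.

Lemma P1 : Mul Zero Zero == Zero.
Proof.
  transitivity (Mul Zero (Add One (Neg One))).
  { rewrite (add_neg One), (mul_comm Zero One), mul_1. reflexivity. }
  rewrite distr, zero_neg1, (mul_comm Zero One), mul_1, add_0. reflexivity.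
Qed.

Lemma P2 : Neg Zero == Zero.
Proof.
  transitivity (Add Zero (Neg Zero)).
  { rewrite (add_comm Zero (Neg Zero)), add_0. reflexivity. }
  rewrite add_neg, P1. reflexivity.
Qed.

Lemma P3 x : Mul Zero x == Mul Zero (Neg x).
Proof.
  rewrite <- (add_neg x), <- (add_neg (Neg x)), neg_neg, (add_comm x (Neg x)).
  reflexivity.
Qed.

Lemma x0x x : Add x (Mul Zero x) == x.
Proof.
  transitivity (Add (Mul x One) (Mul x Zero)).
  { rewrite (mul_comm x One), (mul_1 x), (mul_comm Zero x). reflexivity. }
  rewrite <- distr, add_0, (mul_comm x One), mul_1. reflexivity.
Qed.

Lemma neg_m1 x : Mul (Neg One) x == Neg x.
Proof.
  assert (sa : Neg x == Add (Neg x) (Mul Zero x)).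
  { rewrite (P3 x), x0x. reflexivity. }
  assert (sb' : Mul Zero x == Add x (Mul (Neg One) x)).
  { transitivity (Mul x (Add One (Neg One))).
    - rewrite (add_neg One), (mul_comm Zero One), mul_1, (mul_comm Zero x). reflexivity.
    - rewrite distr, (mul_comm x One), mul_1, (mul_comm x (Neg One)). reflexivity. }
  assert (sc : Mul (Neg One) x == Add (Mul (Neg One) x) (Mul Zero x)).
  { rewrite <- (x0x (Mul (Neg One) x)) at 1.
    rewrite <- (mul_assoc Zero (Neg One) x), zero_neg1. reflexivity. }
  symmetry. transitivity (Add (Neg x) (Mul Zero x)). exact sa.
  rewrite sb', <- (add_assoc (Neg x) x), (add_comm (Neg x) x), (add_neg x),
    (add_comm (Mul Zero x)).
  symmetry. exact sc.
Qed.

Lemma P5 x y : Neg (Mul x y) == Mul x (Neg y).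
Proof.
  rewrite <- (neg_m1 (Mul x y)), <- (neg_m1 y), <- (mul_assoc (Neg One) x y),
    <- (mul_assoc x (Neg One) y), (mul_comm (Neg One) x). reflexivity.
Qed.

Lemma inv_m1 : Inv (Neg One) == Neg One.
Proof.
  assert (m1sq : Mul (Neg One) (Neg One) == One).
  { rewrite neg_m1, neg_neg. reflexivity. }
  assert (aa : Mul (Inv (Neg One)) (Inv (Neg One)) == One).
  { rewrite <- inv_mul, m1sq, inv_1. reflexivity. }
  assert (za : Mul Zero (Inv (Neg One)) == Zero).
  { rewrite <- (zero_sq (Inv (Neg One))), aa, (mul_comm Zero One), mul_1. reflexivity. }
  assert (ma : Mul (Neg One) (Inv (Neg One)) == One).
  { rewrite mul_inv, za, add_0. reflexivity. }
  transitivity (Mul (Mul (Neg One) (Neg One)) (Inv (Neg One))).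
  { rewrite m1sq, mul_1. reflexivity. }
  rewrite mul_assoc, ma, (mul_comm (Neg One) One), mul_1. reflexivity.
Qed.

Lemma P7 x : Inv (Neg x) == Neg (Inv x).
Proof.
  rewrite <- (neg_m1 x), <- (neg_m1 (Inv x)), inv_mul, inv_m1. reflexivity.
Qed.

Lemma P8 x : Mul (Mul x (Inv x)) (Inv x) == Inv x.
Proof.
  rewrite (mul_inv x), (mul_comm (Add One (Mul Zero (Inv x))) (Inv x)), distr,
    (mul_comm (Inv x) One), mul_1, (mul_comm (Inv x) (Mul Zero (Inv x))),
    (mul_assoc Zero (Inv x) (Inv x)), zero_sq, x0x. reflexivity.
Qed.

Lemma P9 : Neg Bot == Bot.
Proof. rewrite <- (neg_m1 Bot), mul_bot. reflexivity. Qed.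

Lemma P10 : Inv Bot == Bot.
Proof.
  transitivity (Inv (Inv Zero)). { rewrite inv_0. reflexivity. }
  rewrite inv_inv, inv_0, mul_bot, add_bot. reflexivity.
Qed.

Lemma idem w : Mul (Mul Zero w) (Mul Zero w) == Mul Zero w.
Proof.
  rewrite (mul_assoc Zero w (Mul Zero w)), (mul_comm w (Mul Zero w)),
    (mul_assoc Zero w w), <- (mul_assoc Zero Zero (Mul w w)), P1, zero_sq.
  reflexivity.
Qed.

Lemma zz w : Add (Mul Zero w) (Mul Zero w) == Mul Zero w.
Proof. rewrite (mul_comm Zero w), <- distr, add_0. reflexivity. Qed.

Lemma sh x W : Mul (Mul Zero x) W == Mul x (Mul Zero W).
Proof. rewrite (mul_comm Zero x), mul_assoc. reflexivity. Qed.

Lemma zv y : Mul Zero (Mul Zero y) == Mul Zero y.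
Proof. rewrite <- (mul_assoc Zero Zero y), P1. reflexivity. Qed.

Lemma zv1 y : Mul Zero (Add (Mul Zero y) One) == Mul Zero y.
Proof.
  rewrite distr, (zv y), (mul_comm Zero One), mul_1, add_0. reflexivity.
Qed.

Lemma uv_u x y : Add (Mul (Mul Zero x) (Mul Zero y)) (Mul Zero x) == Mul (Mul Zero x) (Mul Zero y).
Proof.
  transitivity (Mul (Mul Zero x) (Add (Mul Zero y) One)).
  { rewrite distr, (mul_comm (Mul Zero x) One), mul_1. reflexivity. }
  rewrite (sh x (Add (Mul Zero y) One)), (sh x (Mul Zero y)), zv1, zv. reflexivity.
Qed.

Lemma uv_v x y : Add (Mul (Mul Zero x) (Mul Zero y)) (Mul Zero y) == Mul (Mul Zero x) (Mul Zero y).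
Proof. rewrite (mul_comm (Mul Zero x) (Mul Zero y)). apply uv_u. Qed.

Lemma uv_zz x y : Add (Mul (Mul Zero x) (Mul Zero y)) (Mul (Mul Zero x) (Mul Zero y)) == Mul (Mul Zero x) (Mul Zero y).
Proof. rewrite (mul_assoc Zero x (Mul Zero y)). apply zz. Qed.

Lemma uvE x y : Mul (Mul Zero x) (Mul Zero y) == Mul Zero (Mul x y).
Proof.
  rewrite sh, zv, <- (mul_assoc x Zero y), (mul_comm x Zero), (mul_assoc Zero x y).
  reflexivity.
Qed.

Lemma P4 x y : Mul Zero (Mul x y) == Mul Zero (Add x y).
Proof.
  rewrite <- (uvE x y). symmetry.
  rewrite <- (idem (Add x y)), (distr Zero x y).
  set (u := Mul Zero x). set (v := Mul Zero y).
  rewrite (distr (Add u v) u v), (mul_comm (Add u v) u), (mul_comm (Add u v) v),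
    (distr u u v), (distr v u v).
  unfold u, v. rewrite (idem x), (idem y), (mul_comm (Mul Zero y) (Mul Zero x)).
  rewrite (add_comm (Mul Zero x) (Mul (Mul Zero x) (Mul Zero y))), uv_u,
    uv_v, uv_zz. reflexivity.
Qed.

Theorem proposition2p1 :
  derivable Md_bot (Mul Zero Zero) Zero /\
  derivable Md_bot (Neg Zero) Zero /\
  derivable Md_bot (Mul Zero vx) (Mul Zero (Neg vx)) /\
  derivable Md_bot (Mul Zero (Mul vx vy)) (Mul Zero (Add vx vy)) /\
  derivable Md_bot (Neg (Mul vx vy)) (Mul vx (Neg vy)) /\
  derivable Md_bot (Mul (Neg One) vx) (Neg vx) /\
  derivable Md_bot (Inv (Neg vx)) (Neg (Inv vx)) /\
  derivable Md_bot (Mul (Mul vx (Inv vx)) (Inv vx)) (Inv vx) /\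
  derivable Md_bot (Neg Bot) Bot /\
  derivable Md_bot (Inv Bot) Bot.
Proof.
  repeat split; auto using P1, P2, P3, P4, P5, neg_m1, P7, P8, P9, P10.
Qed.
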